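(* Let $K$ be an algebraically closed field, $R=K[x_1,\dots,x_6]$ and $I=(x_1x_3,\ x_1x_4,\ x_2x_4,\ x_3x_5,\ x_3x_6,\ x_4x_6,\ x_1x_2x_5,\ x_1x_2x_6,\ x_1x_5x_6,\ x_2x_5x_6)$. Then $$I=\sqrt{(x_1x_4,\ x_3x_6,\ x_1x_3+x_2x_4+x_1x_2x_5,\ x_3x_5+x_4x_6+x_1x_2x_6+x_1x_5x_6+x_2x_5x_6)}.$$ *)

(* Defs.v *)
From mathcomp Require Import all_boot all_algebra.
From mathcomp Require Import mpoly.
Set Implicit Arguments. Unset Strict Implicit. Unset Printing Implicit Defensive.
Import GRing.Theory.
Local Open Scope ring_scope.

Definition in_ideal (R : comNzRingType) (n : nat) (gs : seq {mpoly R[n]}) (p : {mpoly R[n]}) : Prop :=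
  exists c : 'I_(size gs) -> {mpoly R[n]}, p = \sum_(i < size gs) c i * gs`_i.

Definition in_radical (R : comNzRingType) (n : nat) (gs : seq {mpoly R[n]}) (p : {mpoly R[n]}) : Prop :=
  exists k : nat, in_ideal gs (p ^+ k).

(* Variables x_1..x_6 of K[x_1,...,x_6], with x_(i+1) = 'X_i for i : 'I_6. *)
Definition xv (K : comNzRingType) (i : 'I_6) : {mpoly K[6]} := 'X_i.

Definition gensI (K : comNzRingType) : seq {mpoly K[6]} :=
  let x1 := xv K 0 in let x2 := xv K 1 in let x3 := xv K 2 in
  let x4 := xv K 3 in let x5 := xv K 4 in let x6 := xv K 5 in
  [:: x1 * x3; x1 * x4; x2 * x4; x3 * x5; x3 * x6; x4 * x6;
      x1 * x2 * x5; x1 * x2 * x6; x1 * x5 * x6; x2 * x5 * x6].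

Definition gensJ (K : comNzRingType) : seq {mpoly K[6]} :=
  let x1 := xv K 0 in let x2 := xv K 1 in let x3 := xv K 2 in
  let x4 := xv K 3 in let x5 := xv K 4 in let x6 := xv K 5 in
  [:: x1 * x4; x3 * x6; x1 * x3 + x2 * x4 + x1 * x2 * x5;
      x3 * x5 + x4 * x6 + x1 * x2 * x6 + x1 * x5 * x6 + x2 * x5 * x6].

(* Main.v *)
Require Import Defs.
From mathcomp Require Import all_boot all_algebra.
From mathcomp Require Import mpoly.
From mathcomp Require Import ring.
Set Implicit Arguments. Unset Strict Implicit. Unset Printing Implicit Defensive.
Import GRing.Theory.
Local Open Scope ring_scope.

Section Gen.
Lemma in_ideal0 (R : comNzRingType) n (gs : seq {mpoly R[n]}) : in_ideal gs 0.
Proof. exists (fun _ => 0); by rewrite big1 // => i _; rewrite mul0r. Qed.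

Lemma in_idealD (R : comNzRingType) n (gs : seq {mpoly R[n]}) p q :
  in_ideal gs p -> in_ideal gs q -> in_ideal gs (p + q).
Proof.
move=> [c ->] [d ->]; exists (fun i => c i + d i); rewrite -big_split.
by apply: eq_bigr => i _; rewrite mulrDl.
Qed.

Lemma in_idealM (R : comNzRingType) n (gs : seq {mpoly R[n]}) a p :
  in_ideal gs p -> in_ideal gs (a * p).
Proof.
move=> [c ->]; exists (fun i => a * c i); rewrite mulr_sumr.
by apply: eq_bigr => i _; rewrite mulrA.
Qed.

Lemma in_idealMr (R : comNzRingType) n (gs : seq {mpoly R[n]}) a p :
  in_ideal gs p -> in_ideal gs (p * a).
Proof. by rewrite mulrC; apply: in_idealM. Qed.

Lemma in_ideal_sum (R : comNzRingType) n (gs : seq {mpoly R[n]}) (I : Type)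
  (r : seq I) (P : pred I) F :
  (forall i, P i -> in_ideal gs (F i)) -> in_ideal gs (\sum_(i <- r | P i) F i).
Proof.
move=> h; apply: (big_ind (in_ideal gs)) => //;
  [exact: in_ideal0 | exact: in_idealD].
Qed.

Lemma in_ideal_gen (R : comNzRingType) n (gs : seq {mpoly R[n]}) i :
  (i < size gs)%N -> in_ideal gs gs`_i.
Proof.
move=> hi; exists (fun j => ((j : nat) == i)%:R).
rewrite (bigD1 (Ordinal hi)) //= eqxx mul1r big1 ?addr0 // => j hj.
have -> : ((j : nat) == i) = false.
  by apply/negbTE; apply: contra hj => /eqP h; apply/eqP/val_inj.
by rewrite mul0r.
Qed.

Lemma in_ideal_sub (R : comNzRingType) n (gs1 gs2 : seq {mpoly R[n]}) p :
  (forall i : 'I_(size gs2), in_ideal gs1 gs2`_i) -> in_ideal gs2 p -> in_ideal gs1 p.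
Proof. move=> h [c ->]; apply: in_ideal_sum => i _; apply: in_idealM; exact: h. Qed.

Lemma in_radD (R : comNzRingType) n (gs : seq {mpoly R[n]}) p q :
  in_radical gs p -> in_radical gs q -> in_radical gs (p + q).
Proof.
move=> [m hm] [k hk]; exists (m + k)%N; rewrite exprDn.
apply: in_ideal_sum => i _; rewrite -mulr_natr; apply: in_idealMr.
case: (leqP k i) => hi.
  rewrite -(subnKC hi) exprD mulrCA mulrC; exact: in_idealM.
have hm' : (m <= m + k - i)%N.
  by rewrite -addnBA ?leq_addr // ltnW.
by rewrite -(subnKC hm') exprD -mulrA; apply: in_idealMr.
Qed.

Lemma in_radM (R : comNzRingType) n (gs : seq {mpoly R[n]}) a p :
  in_radical gs p -> in_radical gs (a * p).
Proof. move=> [k hk]; exists k; rewrite exprMn; exact: in_idealM. Qed.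

Lemma in_rad_sum (R : comNzRingType) n (gs : seq {mpoly R[n]}) (I : Type)
  (r : seq I) (P : pred I) F :
  (forall i, P i -> in_radical gs (F i)) -> in_radical gs (\sum_(i <- r | P i) F i).
Proof.
move=> h; apply: (big_ind (in_radical gs)) => //; last exact: in_radD.
by exists 1%N; rewrite expr1; exact: in_ideal0.
Qed.
End Gen.

Lemma inJ (K : comNzRingType) (a b c d p : {mpoly K[6]}) :
  p = a * (gensJ K)`_0 + b * (gensJ K)`_1 + c * (gensJ K)`_2 + d * (gensJ K)`_3 ->
  in_ideal (gensJ K) p.
Proof.
move->; exists (fun i => nth 0 [:: a; b; c; d] i).
by rewrite !big_ord_recr big_ord0 /= add0r.
Qed.

Lemma cert_x1x3 (K : comNzRingType) : in_radical (gensJ K) (gensI K)`_0.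
Proof.
exists 3%N; apply: (@inJ K (-1 * (xv K 0)*(xv K 1)*(xv K 2)*(xv K 2) + (xv K 0)*(xv K 0)*(xv K 1)*(xv K 2)*(xv K 5)) ((xv K 0)*(xv K 0)*(xv K 0)*(xv K 1)*(xv K 1)*(xv K 4) + (xv K 0)*(xv K 0)*(xv K 0)*(xv K 0)*(xv K 1)*(xv K 4) + (xv K 0)*(xv K 0)*(xv K 0)*(xv K 0)*(xv K 1)*(xv K 1)) ((xv K 0)*(xv K 0)*(xv K 2)*(xv K 2)) (-1 * (xv K 0)*(xv K 0)*(xv K 0)*(xv K 1)*(xv K 2))).
rewrite /gensJ /gensI /=; ring.
Qed.

Lemma cert_x1x4 (K : comNzRingType) : in_radical (gensJ K) (gensI K)`_1.
Proof.
exists 1%N; apply: (@inJ K (1) 0 0 0).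
rewrite /gensJ /gensI /=; ring.
Qed.

Lemma cert_x2x4 (K : comNzRingType) : in_radical (gensJ K) (gensI K)`_2.
Proof.
exists 2%N; apply: (@inJ K (-1 * (xv K 1)*(xv K 2) - (xv K 1)*(xv K 1)*(xv K 4)) 0 ((xv K 1)*(xv K 3)) 0).
rewrite /gensJ /gensI /=; ring.
Qed.

Lemma cert_x3x5 (K : comNzRingType) : in_radical (gensJ K) (gensI K)`_3.
Proof.
exists 2%N; apply: (@inJ K 0 (-1 * (xv K 3)*(xv K 4) - (xv K 1)*(xv K 4)*(xv K 4) - (xv K 0)*(xv K 4)*(xv K 4) - (xv K 0)*(xv K 1)*(xv K 4)) 0 ((xv K 2)*(xv K 4))).
rewrite /gensJ /gensI /=; ring.
Qed.

Lemma cert_x3x6 (K : comNzRingType) : in_radical (gensJ K) (gensI K)`_4.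
Proof.
exists 1%N; apply: (@inJ K 0 (1) 0 0).
rewrite /gensJ /gensI /=; ring.
Qed.

Lemma cert_x4x6 (K : comNzRingType) : in_radical (gensJ K) (gensI K)`_5.
Proof.
exists 3%N; apply: (@inJ K (-1 * (xv K 3)*(xv K 4)*(xv K 5)*(xv K 5)*(xv K 5) + (xv K 2)*(xv K 4)*(xv K 5)*(xv K 5)*(xv K 5) + (xv K 1)*(xv K 4)*(xv K 4)*(xv K 5)*(xv K 5)*(xv K 5) - (xv K 1)*(xv K 3)*(xv K 5)*(xv K 5)*(xv K 5)) (-1 * (xv K 3)*(xv K 3)*(xv K 4)*(xv K 5)) (-1 * (xv K 3)*(xv K 4)*(xv K 5)*(xv K 5)*(xv K 5)) ((xv K 3)*(xv K 3)*(xv K 5)*(xv K 5))).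
rewrite /gensJ /gensI /=; ring.
Qed.

Lemma cert_x1x2x5 (K : comNzRingType) : in_radical (gensJ K) (gensI K)`_6.
Proof.
exists 3%N; apply: (@inJ K ((xv K 0)*(xv K 1)*(xv K 1)*(xv K 2)*(xv K 4) - (xv K 0)*(xv K 1)*(xv K 1)*(xv K 1)*(xv K 4)*(xv K 4) - (xv K 0)*(xv K 0)*(xv K 1)*(xv K 2)*(xv K 5)) (-1 * (xv K 0)*(xv K 0)*(xv K 0)*(xv K 1)*(xv K 1)*(xv K 4) - (xv K 0)*(xv K 0)*(xv K 0)*(xv K 0)*(xv K 1)*(xv K 4) - (xv K 0)*(xv K 0)*(xv K 0)*(xv K 0)*(xv K 1)*(xv K 1)) (-1 * (xv K 0)*(xv K 0)*(xv K 1)*(xv K 2)*(xv K 4) + (xv K 0)*(xv K 0)*(xv K 1)*(xv K 1)*(xv K 4)*(xv K 4)) ((xv K 0)*(xv K 0)*(xv K 0)*(xv K 1)*(xv K 2))).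
rewrite /gensJ /gensI /=; ring.
Qed.

Lemma cert_x1x2x6 (K : comNzRingType) : in_radical (gensJ K) (gensI K)`_7.
Proof.
exists 3%N; apply: (@inJ K ((xv K 1)*(xv K 1)*(xv K 1)*(xv K 5)*(xv K 5)*(xv K 5)) ((xv K 0)*(xv K 0)*(xv K 1)*(xv K 1)*(xv K 5)*(xv K 5) - (xv K 0)*(xv K 0)*(xv K 1)*(xv K 1)*(xv K 4)*(xv K 5) + (xv K 0)*(xv K 0)*(xv K 0)*(xv K 1)*(xv K 5)*(xv K 5)) (-1 * (xv K 0)*(xv K 1)*(xv K 1)*(xv K 5)*(xv K 5)*(xv K 5) - (xv K 0)*(xv K 0)*(xv K 1)*(xv K 5)*(xv K 5)*(xv K 5)) ((xv K 0)*(xv K 0)*(xv K 1)*(xv K 1)*(xv K 5)*(xv K 5))).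
rewrite /gensJ /gensI /=; ring.
Qed.

Lemma cert_x1x5x6 (K : comNzRingType) : in_radical (gensJ K) (gensI K)`_8.
Proof.
exists 3%N; apply: (@inJ K ((xv K 1)*(xv K 4)*(xv K 4)*(xv K 5)*(xv K 5)*(xv K 5) - (xv K 0)*(xv K 4)*(xv K 4)*(xv K 5)*(xv K 5)*(xv K 5) + (xv K 0)*(xv K 1)*(xv K 4)*(xv K 5)*(xv K 5)*(xv K 5)) ((xv K 0)*(xv K 0)*(xv K 4)*(xv K 4)*(xv K 5)*(xv K 5) - (xv K 0)*(xv K 0)*(xv K 4)*(xv K 4)*(xv K 4)*(xv K 5) + (xv K 0)*(xv K 0)*(xv K 0)*(xv K 4)*(xv K 5)*(xv K 5)) (-1 * (xv K 0)*(xv K 4)*(xv K 4)*(xv K 5)*(xv K 5)*(xv K 5) - (xv K 0)*(xv K 0)*(xv K 4)*(xv K 5)*(xv K 5)*(xv K 5)) ((xv K 0)*(xv K 0)*(xv K 4)*(xv K 4)*(xv K 5)*(xv K 5))).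
rewrite /gensJ /gensI /=; ring.
Qed.

Lemma cert_x2x5x6 (K : comNzRingType) : in_radical (gensJ K) (gensI K)`_9.
Proof.
exists 3%N; apply: (@inJ K ((xv K 1)*(xv K 2)*(xv K 5)*(xv K 5)*(xv K 5) - (xv K 1)*(xv K 1)*(xv K 1)*(xv K 5)*(xv K 5)*(xv K 5)) (-1 * (xv K 1)*(xv K 1)*(xv K 4)*(xv K 4)*(xv K 4)*(xv K 5) - (xv K 1)*(xv K 1)*(xv K 3)*(xv K 4)*(xv K 5) + (xv K 0)*(xv K 1)*(xv K 4)*(xv K 4)*(xv K 5)*(xv K 5) + (xv K 0)*(xv K 1)*(xv K 1)*(xv K 4)*(xv K 5)*(xv K 5)) (-1 * (xv K 1)*(xv K 4)*(xv K 4)*(xv K 5)*(xv K 5)*(xv K 5) - (xv K 1)*(xv K 3)*(xv K 5)*(xv K 5)*(xv K 5) - (xv K 1)*(xv K 1)*(xv K 4)*(xv K 5)*(xv K 5)*(xv K 5)) ((xv K 1)*(xv K 1)*(xv K 4)*(xv K 4)*(xv K 5)*(xv K 5) + (xv K 1)*(xv K 1)*(xv K 3)*(xv K 5)*(xv K 5))).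
rewrite /gensJ /gensI /=; ring.
Qed.

Definition gm : seq 'X_{1..6} :=
  [:: (U_(0%R) + U_(2%R))%MM; (U_(0%R) + U_(3%R))%MM; (U_(1%R) + U_(3%R))%MM;
      (U_(2%R) + U_(4%R))%MM; (U_(2%R) + U_(5%R))%MM; (U_(3%R) + U_(5%R))%MM;
      (U_(0%R) + U_(1%R) + U_(4%R))%MM; (U_(0%R) + U_(1%R) + U_(5%R))%MM;
      (U_(0%R) + U_(4%R) + U_(5%R))%MM; (U_(1%R) + U_(4%R) + U_(5%R))%MM].

Definition good (m : 'X_{1..6}) := has (fun g => (g <= m)%MM) gm.

Lemma gI_mono (K : comNzRingType) i : (i < 10)%N -> (gensI K)`_i = 'X_[(nth 0%MM gm i)].
Proof.
by case: i => [|[|[|[|[|[|[|[|[|[|i]]]]]]]]]] //= _; rewrite !mpolyXD.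
Qed.

Lemma gm_sq g : g \in gm -> forall i, (g i <= 1)%N.
Proof.
rewrite !inE => h i.
by repeat (case/orP: h => [/eqP -> | h]; [rewrite !mnmDE !mnm1E;
  case: i => [[|[|[|[|[|[|]]]]]]] //|]); move/eqP: h => ->;
  rewrite !mnmDE !mnm1E; case: i => [[|[|[|[|[|[|]]]]]]].
Qed.

Lemma good_mul m k : good (m *+ k)%MM -> good m.
Proof.
case/hasP=> g gin gle; apply/hasP; exists g => //; apply/mnm_lepP => i.
move: (gm_sq gin i) (mnm_lepP gle i); rewrite mulmnE.
case: (m i) => [|j]; first by rewrite mul0n; case: (g i).
move=> h _; exact: leq_trans h _.
Qed.

Lemma coefMX_notle (R : comNzRingType) (c : {mpoly R[6]}) g m :
  ~~ (g <= m)%MM -> (c * 'X_[g])@_m = 0.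
Proof.
move=> h; rewrite {1}(mpolyE c) mulr_suml raddf_sum big1 // => k _.
rewrite -scalerAl -mpolyXD.
change (mcoeff m (c@_k *: 'X_[k + g]) = 0).
rewrite mcoeffZ mcoeffX.
have -> : ((k + g)%MM == m) = false.
  by apply/negbTE; apply: contra h => /eqP <-; apply: lem_addl.
by rewrite mulr0.
Qed.

Lemma coefI (K : comNzRingType) (p : {mpoly K[6]}) :
  in_ideal (gensI K) p -> forall m, ~~ good m -> p@_m = 0.
Proof.
move=> [c ->] m hm; rewrite raddf_sum big1 // => i _.
rewrite gI_mono //; apply: coefMX_notle.
by move/hasPn: hm; apply; apply: mem_nth.
Qed.

Lemma inI_good (K : comNzRingType) m : good m -> in_ideal (gensI K) 'X_[m].
Proof.
case/hasP=> g /(nthP 0%MM) [i hi <-] gle.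
rewrite -(submK gle) mpolyXD -gI_mono //; apply: in_idealM.
exact: in_ideal_gen.
Qed.

Lemma expand (R : comNzRingType) (a b : R) k : exists s, (a + b) ^+ k = a ^+ k + b * s.
Proof.
elim: k => [|k [s hs]]; first by exists 0; rewrite !expr0 mulr0 addr0.
exists (a ^+ k + s * (a + b)); rewrite !exprSr hs; ring.
Qed.

Lemma radI (K : closedFieldType) (p : {mpoly K[6]}) k :
  in_ideal (gensI K) (p ^+ k) -> in_ideal (gensI K) p.
Proof.
move=> hpk.
set r := \sum_(m <- msupp p | good m) p@_m *: 'X_[m].
set q := \sum_(m <- msupp p | ~~ good m) p@_m *: 'X_[m].
have epq : p = q + r by rewrite {1}(mpolyE p) (bigID good) /= addrC.
have rI : in_ideal (gensI K) r.
  apply: in_ideal_sum => m hm; rewrite -mul_mpolyC; apply: in_idealM.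
  exact: inI_good.
have qk : in_ideal (gensI K) (q ^+ k).
  have [s hs] := expand q r k; rewrite -epq in hs.
  rewrite (_ : q ^+ k = p ^+ k + (- s) * r); last by rewrite hs; ring.
  by apply: in_idealD => //; apply: in_idealM.
have q0 : forall m, good m -> q@_m = 0.
  move=> m hm; rewrite /q raddf_sum big1_seq // => m' /andP [hg _].
  change (mcoeff m (p@_m' *: 'X_[m']) = 0); rewrite mcoeffZ mcoeffX.
  have -> : (m' == m) = false.
    by apply/negbTE; apply: contraNneq hg => ->.
  by rewrite mulr0.
have [q0'|qn0] := eqVneq q 0; first by rewrite epq q0' add0r.
exfalso.
have hl := mlead_supp qn0.
have ng : ~~ good (mlead q).
  apply/negP => g; have := q0 _ g; move/eqP; rewrite mcoeff_eq0 hl.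
  by [].
have ngk : ~~ good (mlead q *+ k)%MM by apply: contra ng; apply: good_mul.
have := coefI qk ngk.
rewrite mleadcX.
move=> /eqP; rewrite expf_eq0 mleadc_eq0 (negbTE qn0) andbF.
by [].
Qed.

Lemma JsubI (K : comNzRingType) (i : 'I_(size (gensJ K))) :
  in_ideal (gensI K) (gensJ K)`_i.
Proof.
case: i => [[|[|[|[|i]]]] hi] //=.
- exact: (@in_ideal_gen _ _ (gensI K) 1).
- exact: (@in_ideal_gen _ _ (gensI K) 4).
- apply: in_idealD; last exact: (@in_ideal_gen _ _ (gensI K) 6).
  apply: in_idealD; last exact: (@in_ideal_gen _ _ (gensI K) 2).
  exact: (@in_ideal_gen _ _ (gensI K) 0).
- apply: in_idealD; last exact: (@in_ideal_gen _ _ (gensI K) 9).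
  apply: in_idealD; last exact: (@in_ideal_gen _ _ (gensI K) 8).
  apply: in_idealD; last exact: (@in_ideal_gen _ _ (gensI K) 7).
  apply: in_idealD; last exact: (@in_ideal_gen _ _ (gensI K) 5).
  exact: (@in_ideal_gen _ _ (gensI K) 3).
Qed.

Lemma rad_gen (K : comNzRingType) (i : 'I_(size (gensI K))) :
  in_radical (gensJ K) (gensI K)`_i.
Proof.
case: i => [[|[|[|[|[|[|[|[|[|[|i]]]]]]]]]] hi] //=.
- exact: cert_x1x3.
- exact: cert_x1x4.
- exact: cert_x2x4.
- exact: cert_x3x5.
- exact: cert_x3x6.
- exact: cert_x4x6.
- exact: cert_x1x2x5.
- exact: cert_x1x2x6.
- exact: cert_x1x5x6.
- exact: cert_x2x5x6.
Qed.

Theorem mainTheorem12 (K : closedFieldType) (p : {mpoly K[6]}) :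
  in_ideal (gensI K) p <-> in_radical (gensJ K) p.
Proof.
split.
- move=> [c ->]; apply: in_rad_sum => i _; apply: in_radM; exact: rad_gen.
- move=> [k hk]; apply: (@radI K p k); apply: in_ideal_sub hk; exact: JsubI.
Qed.
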